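(* Let $q=AB$ be a two-atom query over $R$ satisfying the standing assumption below and the zig-zag property. For every database $D$, every repair $r$ of $D$ and all facts $a,b$: if $r\models q(ab)$ then $\{a\}\in\Delta_2(q,D)$ or there exists a repair $s$ of $D$ such that $q(s)\subsetneq q(r)$.
   Context: $R$ is a relation symbol of arity $k\ge1$ whose first $l$ positions form its primary key. Facts $R(\bar a)$, atoms $R(\bar x)$; $\overline{\mathrm{key}}(t)$ is the tuple of the first $l$ entries of $t$; $a\sim b$ iff $\overline{\mathrm{key}}(a)=\overline{\mathrm{key}}(b)$. A database is a finite set of facts; a block is a maximal set of pairwise key-equal facts; a repair is a $\subseteq$-maximal subset with no two distinct key-equal facts. For a set of facts $S$, a solution of $q$ in $S$ is a pair $(\mu(A),\mu(B))$ with $\mu$ a mapping from variables to elements and $\mu(A),\mu(B)\in S$; $q(S)$ is the set of solutions and $S\models q(ab)$ means $(a,b)\in q(S)$; $S$ satisfies $q$ if $q(S)\neq\emptyset$. Zig-zag property: for every database $D$ and facts $a,b,b',c$ of $D$ with $a\not\sim c$, $a\ne b$, $b\sim b'$, if $D\models q(ab)$ and $D\models q(cb')$ then $D\models q(ab')$. Greedy fixpoint: a $k$-set of $D$ is $S\subseteq D$ with $|S|\le k$ and at most one fact per block; $\Delta_k(q,D)$ is the least set of $k$-sets containing every $k$-set satisfying $q$ and containing a $k$-set $S$ whenever some block $B$ of $D$ is such that for every $u\in B$ some $S'\subseteq S\cup\{u\}$ lies in $\Delta_k(q,D)$. Standing assumption: $\overline{\mathrm{key}}(A)\ne\overline{\mathrm{key}}(B)$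 and $q$ is not equivalent over all consistent databases to a single-atom query. *)

(* Defs.v *)
From mathcomp Require Import all_boot finmap.
Set Implicit Arguments. Unset Strict Implicit. Unset Printing Implicit Defensive.
Local Open Scope fset_scope.

(* Conventions: the domain of elements is nat; variables are nat.
   A fact R(a_1..a_k) is a k.-tuple nat; an atom R(x_1..x_k) is a
   k.-tuple of variables (nat).  The key is the first l positions. *)

Definition fact (k : nat) := k.-tuple nat.

Definition keyeq (k l : nat) (a b : fact k) : bool :=
  take l (tval a) == take l (tval b).

Definition inst (k : nat) (mu : nat -> nat) (A : k.-tuple nat) : fact k :=
  map_tuple mu A.

Definition sol (k : nat) (A B : k.-tuple nat) (S : {fset fact k}) (a b : fact k) : Prop :=
  exists mu : nat -> nat, inst mu A = a /\ inst mu B = b /\ a \in S /\ b \in S.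

Definition sat (k : nat) (A B : k.-tuple nat) (S : {fset fact k}) : Prop :=
  exists a b, sol A B S a b.

Definition consistent (k l : nat) (S : {fset fact k}) : Prop :=
  forall a b, a \in S -> b \in S -> keyeq l a b -> a = b.

Definition repair (k l : nat) (D r : {fset fact k}) : Prop :=
  r `<=` D /\ consistent l r /\
  forall r' : {fset fact k}, r `<=` r' -> r' `<=` D -> consistent l r' -> r' = r.

Definition sol_strict_sub (k : nat) (A B : k.-tuple nat) (s r : {fset fact k}) : Prop :=
  (forall a b, sol A B s a b -> sol A B r a b) /\
  exists a b, sol A B r a b /\ ~ sol A B s a b.

Definition zigzag (k l : nat) (A B : k.-tuple nat) : Prop :=
  forall (D : {fset fact k}) (a b b' c : fact k),
    a \in D -> b \in D -> b' \in D -> c \in D ->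
    ~~ keyeq l a c -> a != b -> keyeq l b b' ->
    sol A B D a b -> sol A B D c b' -> sol A B D a b'.

Definition equiv_single_atom (k l : nat) (A B : k.-tuple nat) : Prop :=
  exists C : k.-tuple nat, forall D : {fset fact k}, consistent l D ->
    (sat A B D <-> exists mu : nat -> nat, inst mu C \in D).

Definition kset (k l K : nat) (D S : {fset fact k}) : Prop :=
  S `<=` D /\ #|` S| <= K /\ consistent l S.

Inductive Delta (k l K : nat) (A B : k.-tuple nat) (D : {fset fact k})
  : {fset fact k} -> Prop :=
| Delta_base : forall S, kset l K D S -> sat A B S -> Delta l K A B D S
| Delta_step : forall S, kset l K D S ->
    (exists d, d \in D /\
      forall u, u \in D -> keyeq l u d ->
        exists S', S' `<=` (u |` S) /\ Delta l K A B D S') ->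
    Delta l K A B D S.

(* Main.v *)
Require Import Defs.
From mathcomp Require Import all_boot finmap.
From Stdlib Require Import Classical.
Local Open Scope fset_scope.
Set Implicit Arguments.

Lemma keyeq_sym {k l} {a b : fact k} : keyeq l a b -> keyeq l b a.
Proof. by rewrite /keyeq eq_sym. Qed.
Lemma keyeq_trans {k l} {a b c : fact k} : keyeq l a b -> keyeq l b c -> keyeq l a c.
Proof. by rewrite /keyeq => /eqP ->. Qed.
Lemma keyeq_refl k l (a : fact k) : keyeq l a a.
Proof. exact: eqxx. Qed.

Lemma sol_ch {k} {A B : k.-tuple nat} {S T a b} :
  sol A B S a b -> a \in T -> b \in T -> sol A B T a b.
Proof. by move=> [mu [h1 [h2 _]]] ha hb; exists mu. Qed.

Lemma sol_mem {k} {A B : k.-tuple nat} {S a b} : sol A B S a b -> a \in S /\ b \in S.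
Proof. by move=> [mu [_ [_ [h1 h2]]]]. Qed.

Lemma repairP k l (D s : {fset fact k}) :
  repair l D s <-> [/\ s `<=` D, consistent l s &
     forall d, d \in D -> exists2 x, x \in s & keyeq l x d].
Proof.
split.
- move=> [hsD [hc hmax]]; split => // d hd.
  case: (classic (exists2 x, x \in s & keyeq l x d)) => // hno.
  have e : d |` s = s.
    apply: hmax.
    - by apply/fsubsetP => x hx; rewrite !inE hx orbT.
    - apply/fsubsetP => x; rewrite !inE => /orP [/eqP -> //|]; exact: (fsubsetP hsD).
    - move=> x z; rewrite !inE => /orP [/eqP ->|hx] /orP [/eqP ->|hz] //.
      + move=> hk; exfalso; apply: hno; exists z => //; exact: keyeq_sym.
      + move=> hk; exfalso; apply: hno; exists x => //.
      + exact: hc.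
  exists d; last exact: keyeq_refl.
  by rewrite -e !inE eqxx.
- move=> [hsD hc hcov]; split => //; split => // r' hsr hrD hcr.
  apply/eqP; rewrite eqEfsubset hsr andbT; apply/fsubsetP => w hw.
  have [x hx hk] := hcov w (fsubsetP hrD w hw).
  by rewrite -(hcr x w (fsubsetP hsr x hx) hw hk).
Qed.

Lemma card2 k (x y : fact k) : #|` x |` [fset y]| <= 2.
Proof. by rewrite cardfsU1 cardfs1; case: (_ \notin _). Qed.

Lemma kset_sub k l (D s S : {fset fact k}) :
  repair l D s -> S `<=` s -> #|` S| <= 2 -> kset l 2 D S.
Proof.
move=> [hsD [hc _]] hSs hcard; split; last split => //.
- exact: fsubset_trans hSs hsD.
- move=> x y hx hy; apply: hc; exact: (fsubsetP hSs).
Qed.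

Lemma pair_sub k (s : {fset fact k}) x y : x \in s -> y \in s -> x |` [fset y] `<=` s.
Proof. by move=> hx hy; apply/fsubsetP => z; rewrite !inE => /orP [/eqP ->|/eqP ->]. Qed.

Lemma sol_Delta k l (A B : k.-tuple nat) (D s : {fset fact k}) x y :
  repair l D s -> sol A B s x y -> Delta l 2 A B D (x |` [fset y]).
Proof.
move=> hs hsol; have [hx hy] := sol_mem hsol.
apply: Delta_base.
- apply: kset_sub hs _ (card2 _ _); exact: pair_sub.
- exists x, y; apply: sol_ch hsol _ _; by rewrite !inE eqxx ?orbT.
Qed.

Lemma repair_swap k l (D s : {fset fact k}) y u :
  repair l D s -> y \in s -> u \in D -> keyeq l u y -> repair l D (u |` (s `\ y)).
Proof.
move=> /repairP [hsD hc hcov] hy hu huy; apply/repairP; split.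
- apply/fsubsetP => x; rewrite !inE => /orP [/eqP -> //|/andP [_ hx]].
  exact: (fsubsetP hsD).
- move=> x z; rewrite !inE => /orP [/eqP ->|/andP [hxy hx]] /orP [/eqP ->|/andP [hzy hz]] //.
  + move=> hk; have := hc y z hy hz (keyeq_trans (keyeq_sym huy) hk).
    by move=> e; rewrite e eqxx in hzy.
  + move=> hk; have := hc y x hy hx (keyeq_trans (keyeq_sym huy) (keyeq_sym hk)).
    by move=> e; rewrite e eqxx in hxy.
  + exact: hc.
- move=> d hd; have [x hx hk] := hcov d hd.
  case: (eqVneq x y) => [exy|nxy].
  + by exists u; [rewrite !inE eqxx | rewrite -exy in huy; exact: keyeq_trans huy hk].
  + by exists x => //; rewrite !inE nxy hx orbT.
Qed.

Definition Inv k l (A B : k.-tuple nat) (D r s : {fset fact k}) (a b : fact k) : Prop :=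
  repair l D s /\ a \in s /\ b \notin s /\
   forall n, n \in s -> n \notin r ->
     ~ Delta l 2 A B D (a |` [fset n]) /\
     exists p g, p \in s /\ (p = a \/ p \notin r) /\ g \in D /\ keyeq l g n /\
        p != g /\ sol A B D p g /\ ~ Delta l 2 A B D (p |` [fset n]).

Lemma not_step k l (A B : k.-tuple nat) (D S : {fset fact k}) y :
  kset l 2 D S -> ~ Delta l 2 A B D S -> y \in D ->
  exists u, u \in D /\ keyeq l u y /\
    ~ (exists S', S' `<=` u |` S /\ Delta l 2 A B D S').
Proof.
move=> hk hnd hy.
have H : ~ (forall u, u \in D -> keyeq l u y ->
             exists S', S' `<=` u |` S /\ Delta l 2 A B D S').
  move=> H; apply: hnd; apply: Delta_step => //; exists y; split => //.
have [u Hu] := not_all_ex_not _ _ H.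
have [hu Hu2] := imply_to_and _ _ Hu.
have [huy Hu3] := imply_to_and _ _ Hu2.
by exists u; split; [|split].
Qed.

Lemma inv_step k l (A B : k.-tuple nat) (D r s : {fset fact k}) (a b : fact k) n y :
  repair l D r -> b \in r ->
  Inv l A B D r s a b -> n \in s -> n \notin r -> y \in s -> y \in r ->
  sol A B s n y ->
  exists s', Inv l A B D r s' a b /\ #|` s' `&` r| < #|` s `&` r|.
Proof.
move=> hr hbr [hs [has [hbs hinv]]] hn hnr hy hyr hsol.
have [hnda _] := hinv n hn hnr.
have hsD : s `<=` D by case: hs.
have hya : y != a.
  apply/eqP => e; apply: hnda; rewrite -e.
  have -> : y |` [fset n] = n |` [fset y].
    by apply/fsetP => z; rewrite !inE orbC.
  exact: sol_Delta hs hsol.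
have hkan : kset l 2 D (a |` [fset n]) by apply: (kset_sub _ hs _ (card2 _ _)); exact: pair_sub.
have [u [hu [huy Hu]]] := not_step _ hkan hnda (fsubsetP hsD y hy).
have hnu : ~ Delta l 2 A B D (n |` [fset u]).
  move=> h; apply: Hu; exists (n |` [fset u]); split => //.
  by apply/fsubsetP => z; rewrite !inE => /orP [->|->]; rewrite ?orbT.
have hau : ~ Delta l 2 A B D (a |` [fset u]).
  move=> h; apply: Hu; exists (a |` [fset u]); split => //.
  by apply/fsubsetP => z; rewrite !inE => /orP [->|->]; rewrite ?orbT.
have huy' : u != y.
  apply/eqP => e; apply: hnu; rewrite e; exact: sol_Delta hs hsol.
have hur : u \notin r.
  apply/negP => hur; case: hr => _ [hcr _].
  by move/eqP: huy'; apply; apply: hcr.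
have hny : n != y by apply/eqP => e; rewrite e hyr in hnr.
exists (u |` (s `\ y)); split.
- split; first exact: (repair_swap _ _ hs hy hu huy).
  split; first by rewrite !inE has andbT; apply/orP; right; rewrite eq_sym.
  split.
    rewrite !inE negb_or (negbTE hbs) andbF andbT; apply/eqP => e; rewrite -e hbr in hur; done.
  move=> m; rewrite !inE => /orP [/eqP ->|/andP [hmy hm]] hmr.
  + split => //; exists n, y; do !split => //.
    * by rewrite !inE hny hn orbT.
    * by right.
    * exact: (fsubsetP hsD).
    * exact: keyeq_sym.
    * by apply: sol_ch hsol (fsubsetP hsD n hn) (fsubsetP hsD y hy).
  + have [h1 [p [g [hp [hpa [hg [hgk [hpg [hsg hpn]]]]]]]]] := hinv m hm hmr.
    split => //; exists p, g; do !split => //.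
    rewrite !inE hp andbT; apply/orP; right; apply/eqP => e.
    by case: hpa => [e'|hpr]; [rewrite -e' e eqxx in hya | rewrite e hyr in hpr].
- have hsub : (u |` (s `\ y)) `&` r `<=` (s `&` r) `\ y.
    apply/fsubsetP => z; rewrite !inE => /andP [/orP [/eqP ez|/andP [-> ->]] hz] //.
    by rewrite ez (negbTE hur) in hz.
  apply: leq_ltn_trans (fsubset_leq_card hsub) _.
  by rewrite [X in _ < X](cardfsD1 y) !inE hy hyr.
Qed.

Lemma inv_final k l (A B : k.-tuple nat) (D r s : {fset fact k}) (a b : fact k) :
  zigzag l A B -> sol A B r a b ->
  Inv l A B D r s a b ->
  (forall n y, n \in s -> n \notin r -> y \in s -> y \in r -> ~ sol A B s n y) ->
  sol_strict_sub A B s r.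
Proof.
move=> hz hab [hs [has [hbs hinv]]] hnov.
have hsD : s `<=` D by case: hs.
have hcs : consistent l s by case: hs => _ [].
split.
- move=> x y hxy; have [hx hy] := sol_mem hxy.
  case: (boolP (y \in r)) => hyr; last first.
    have [_ [p [g [hp [_ [hg [hgy [hpg [hpgs hpy]]]]]]]]] := hinv y hy hyr.
    exfalso; apply: hpy; apply: (sol_Delta hs).
    case: (boolP (keyeq l p x)) => hpx.
      by rewrite (hcs p x hp hx hpx).
    have hD := fsubsetP hsD.
    have := hz D p g y x (hD p hp) hg (hD y hy) (hD x hx) hpx hpg hgy hpgs
               (sol_ch hxy (hD x hx) (hD y hy)).
    by move=> h; apply: sol_ch h hp hy.
  case: (boolP (x \in r)) => hxr; last by exfalso; exact: (hnov x y hx hxr hy hyr hxy).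
  exact: sol_ch hxy hxr hyr.
- exists a, b; split => // h; have [_ hb] := sol_mem h; by rewrite hb in hbs.
Qed.

Lemma inv_exists k l (A B : k.-tuple nat) (D r : {fset fact k}) (a b : fact k) :
  repair l D r -> b \in r ->
  forall m s, #|` s `&` r| <= m -> Inv l A B D r s a b ->
  exists s', Inv l A B D r s' a b /\
   (forall n y, n \in s' -> n \notin r -> y \in s' -> y \in r -> ~ sol A B s' n y).
Proof.
move=> hr hbr; elim=> [|m IH] s hm hinv.
all: case: (classic (exists n y, n \in s /\ n \notin r /\ y \in s /\ y \in r /\ sol A B s n y)).
- move=> [n [y [hn [hnr [hy [hyr hsol]]]]]].
  have [s' [_ hlt]] := inv_step hr hbr hinv hn hnr hy hyr hsol.
  by move: hm; rewrite leqn0 => /eqP e; rewrite e in hlt.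
- move=> hno; exists s; split => // n y hn hnr hy hyr hsol; apply: hno.
  by exists n, y.
- move=> [n [y [hn [hnr [hy [hyr hsol]]]]]].
  have [s' [hinv' hlt]] := inv_step hr hbr hinv hn hnr hy hyr hsol.
  apply: (IH s') hinv'; by rewrite -ltnS (leq_trans hlt hm).
- move=> hno; exists s; split => // n y hn hnr hy hyr hsol; apply: hno.
  by exists n, y.
Qed.

Unset Implicit Arguments.

Theorem lemma6p3 (k l : nat) (A B : k.-tuple nat) :
  0 < k -> l <= k ->
  take l (tval A) != take l (tval B) ->
  ~ equiv_single_atom l A B ->
  zigzag l A B ->
  forall (D r : {fset fact k}) (a b : fact k),
    repair l D r -> sol A B r a b ->
    Delta l 2 A B D [fset a] \/
    exists s : {fset fact k}, repair l D s /\ sol_strict_sub A B s r.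
Proof.
move=> _ _ _ _ hz D r a b hr hab.
have [har hbr] := sol_mem hab.
have hrD : r `<=` D by case: hr.
have hcr : consistent l r by case: hr => _ [].
have hka : kset l 2 D [fset a].
  apply: (kset_sub _ hr); first by apply/fsubsetP => z; rewrite inE => /eqP ->.
  by rewrite cardfs1.
case: (eqVneq a b) => [eab|nab].
  left; apply: Delta_base => //; exists a, a; subst b.
  exact: (sol_ch hab (fset11 a) (fset11 a)).
case: (classic (Delta l 2 A B D [fset a])) => hda; first by left.
right.
have [u [hu [hub Hu]]] := not_step b hka hda (fsubsetP hrD b hbr).
have hau : ~ Delta l 2 A B D (a |` [fset u]).
  move=> h; apply: Hu; exists (a |` [fset u]); split => //.
  by apply/fsubsetP => z; rewrite !inE => /orP [->|->]; rewrite ?orbT.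
have hub' : u != b.
  apply/eqP => e; apply: hau; rewrite e; exact: sol_Delta hr hab.
have hur : u \notin r.
  by apply/negP => hur; move/eqP: hub'; apply; apply: hcr.
have hinv0 : Inv l A B D r (u |` (r `\ b)) a b.
  split; first exact: (repair_swap _ _ hr hbr hu hub).
  split; first by rewrite !inE har nab orbT.
  split.
    by rewrite !inE eqxx /= orbF eq_sym.
  move=> m; rewrite !inE => /orP [/eqP ->|/andP [_ hm]] hmr; last by rewrite hm in hmr.
  split => //; exists a, b; do !split => //.
  + by rewrite !inE har nab orbT.
  + by left.
  + exact: (fsubsetP hrD).
  + exact: keyeq_sym.
  + exact: (sol_ch hab (fsubsetP hrD a har) (fsubsetP hrD b hbr)).
have [s [hinv hnov]] := inv_exists hr hbr _ (leqnn _) hinv0.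
exists s; split; first by case: hinv.
exact: inv_final hz hab hinv hnov.
Qed.
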